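(* Let $n\geqslant2$, $\lambda>0$, distinct points $p_1,\ldots,p_M\in\mathbb{Z}^n$ and positive integers $n_1,\ldots,n_M$ be given, and let $g=4\pi\sum_{j=1}^Mn_j\delta_{p_j}$. Let $\Omega_0\subset\mathbb{Z}^n$ be a finite set containing $\{p_j\}_{j=1}^M$ and let $\Omega$ be a finite connected subset with $\Omega_0\subset\Omega$. Fix $K>2\lambda$, let $u_0=0$ and for $k\geqslant1$ let $u_k:\overline\Omega\to\mathbb{R}$ be the (unique) solution of $$(\Delta-K)u_k=\lambda e^{u_{k-1}}(e^{u_{k-1}}-1)+g-Ku_{k-1}\ \text{ on }\Omega,\qquad u_k=0\ \text{ on }\delta\Omega,$$ and let $u_\Omega=\lim_{k\to\infty}u_k$ (pointwise limit, which exists and is finite). Then for any function $V:\overline\Omega\to\mathbb{R}$ satisfying $$\Delta V\geqslant\lambda e^V(e^V-1)+g\ \text{ on }\Omega,\qquad V\leqslant0\ \text{ on }\delta\Omega,$$ we have $0=u_0\geqslant u_1\geqslant\cdots\geqslant u_k\geqslant\cdots\geqslant u_\Omega\geqslant V$ on $\overline\Omega$.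
   Context: $\mathbb{Z}^n$ is the integer lattice graph with $x\sim y$ iff $\sum_i|x_i-y_i|=1$. For a finite $\Omega\subset\mathbb{Z}^n$, $\delta\Omega=\{y\in\mathbb{Z}^n\setminus\Omega:\exists x\in\Omega,\ y\sim x\}$ and $\overline\Omega=\Omega\cup\delta\Omega$. For $u:\overline\Omega\to\mathbb{R}$ and $x\in\Omega$, $\Delta u(x)=\sum_{y\sim x}(u(y)-u(x))$. $\delta_p$ is the function equal to $1$ at $p$ and $0$ elsewhere. *)

(* Defs.v *)
From HB Require Import structures.
From mathcomp Require Import all_boot all_order all_algebra.
From mathcomp Require Import all_classical all_reals all_analysis.
Set Implicit Arguments. Unset Strict Implicit. Unset Printing Implicit Defensive.
Import Order.TTheory GRing.Theory Num.Theory.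
Local Open Scope ring_scope.

Definition zpt (n : nat) := 'rV[int]_n.

Definition zadj (n : nat) (x y : zpt n) : bool :=
  (\sum_(i < n) `|x 0 i - y 0 i|) == 1.

(* The 2n lattice neighbours x +- e_i of x (exactly the y with zadj x y). *)
Definition znbrs (n : nat) (x : zpt n) : seq (zpt n) :=
  [seq x + delta_mx 0 i | i <- enum 'I_n] ++ [seq x - delta_mx 0 i | i <- enum 'I_n].

Definition zbdry (n : nat) (Om : seq (zpt n)) (y : zpt n) : bool :=
  (y \notin Om) && has (fun x => zadj x y) Om.

Definition zclos (n : nat) (Om : seq (zpt n)) (y : zpt n) : bool :=
  (y \in Om) || zbdry Om y.

Definition zconnected (n : nat) (Om : seq (zpt n)) : Prop :=
  forall x y, x \in Om -> y \in Om ->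
    exists s : seq (zpt n), [&& path (@zadj n) x s, last x s == y & all (mem Om) s].

Definition zlap (R : realType) (n : nat) (u : zpt n -> R) (x : zpt n) : R :=
  \sum_(y <- znbrs x) (u y - u x).

Definition gsrc (R : realType) (n M : nat) (p : 'I_M -> zpt n) (nn : 'I_M -> nat)
  (x : zpt n) : R :=
  4 * pi * \sum_(j < M) ((nn j)%:R * (x == p j)%:R).

(* Main.v *)
Require Import Defs.
From HB Require Import structures.
From mathcomp Require Import all_boot all_order all_algebra.
From mathcomp Require Import all_classical all_reals all_analysis.
From mathcomp Require Import ring lra.
Import Order.TTheory GRing.Theory Num.Theory numFieldNormedType.Exports.
Local Open Scope ring_scope.
Local Open Scope classical_set_scope.

Section Aux.
Variable n : nat.

Lemma zadj_nbr (x y : zpt n) : y \in znbrs x -> zadj x y.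
Proof.
have hP : forall a c : int, a - (a + c) = - c by move=> a c; ring.
have hM : forall a c : int, a - (a - c) = c by move=> a c; ring.
rewrite /znbrs mem_cat => /orP[] /mapP[i _ ->]; rewrite /zadj;
  rewrite (bigD1 i) //= big1 ?addr0 => [|j Hj]; rewrite !mxE ?eqxx /= ?hP ?hM ?normrN //;
  by rewrite (negbTE Hj).
Qed.

Lemma nbr_clos (Om : seq (zpt n)) x y : x \in Om -> y \in znbrs x -> zclos Om y.
Proof.
move=> hx hy; rewrite /zclos /zbdry; case: (boolP (y \in Om)) => //= _.
by apply/hasP; exists x => //; apply: zadj_nbr.
Qed.

Lemma list_max (R : realType) (w : zpt n -> R) (s : seq (zpt n)) :
  s != [::] -> exists2 x, x \in s & forall y, y \in s -> w y <= w x.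
Proof.
elim: s => // a s IH _; case: (eqVneq s [::]) => [->|hs].
  by exists a; rewrite ?mem_head // => y; rewrite inE => /eqP ->.
case: (IH hs) => b hb Hb.
case: (lerP (w a) (w b)) => hab.
  exists b; first by rewrite inE hb orbT.
  by move=> y; rewrite inE => /orP[/eqP ->|/Hb].
exists a; first by rewrite mem_head.
move=> y; rewrite inE => /orP[/eqP ->//|/Hb h]; apply: (le_trans h); exact: ltW.
Qed.

Lemma maxp (R : realType) (Om : seq (zpt n)) (w : zpt n -> R) :
  (forall y, zbdry Om y -> w y <= 0) ->
  (forall x, x \in Om -> 0 < w x -> 0 < zlap w x) ->
  forall y, zclos Om y -> w y <= 0.
Proof.
move=> hb hi.
have hOm : forall y, y \in Om -> w y <= 0.
  move=> y hy; rewrite leNgt; apply/negP => wy.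
  have hne : Om != [::] by apply/eqP => E; rewrite E in hy.
  case: (@list_max R w Om hne) => x hx Hx.
  have wx : 0 < w x by apply: lt_le_trans wy (Hx _ hy).
  have := hi x hx wx; rewrite ltNge => /negP; apply.
  rewrite /zlap big_seq; apply: sumr_le0 => z hz; rewrite subr_le0.
  case: (boolP (z \in Om)) => hzO; first exact: Hx.
  apply: le_trans (hb z _) (ltW wx).
  by rewrite /zbdry hzO /=; apply/hasP; exists x => //; apply: zadj_nbr.
by move=> y; rewrite /zclos => /orP[/hOm|/hb].
Qed.

Lemma zlapB (R : realType) (a b : zpt n -> R) x :
  zlap (fun y => a y - b y) x = zlap a x - zlap b x.
Proof. by rewrite /zlap -sumrB; apply: eq_bigr => y _; ring. Qed.

Lemma fmono (R : realType) (lambda K a b : R) : 0 < lambda -> 2 * lambda < K ->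
  a <= b -> b <= 0 ->
  lambda * expR b * (expR b - 1) - K * b <= lambda * expR a * (expR a - 1) - K * a.
Proof.
move=> hl hK hab hb0.
have eb1 : expR b <= 1 by rewrite expR_le1.
have ea0 : 0 < expR a := expR_gt0 a.
have eab : expR a <= expR b by rewrite ler_expR.
have h1 : expR b - expR a <= b - a.
  have : 1 + (a - b) <= expR (a - b) := expR_ge1Dx _.
  move=> h.
  have eb0 : 0 < expR b := expR_gt0 b.
  have h2 : expR b * (1 + (a - b)) <= expR a.
    have -> : expR a = expR b * expR (a - b) by rewrite -expRD; congr expR; ring.
    by rewrite ler_wpM2l // ltW.
  have := @mulr_ge0 _ (1 - expR b) (b - a); rewrite !subr_ge0 => /(_ eb1 hab).
  nra.
have H : expR b ^+ 2 - expR a ^+ 2 <= 2 * (b - a).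
  have : (expR b - expR a) * (2 - expR b - expR a) >= 0.
    apply: mulr_ge0; lra.
  nra.
have := @mulr_ge0 _ lambda (2 * (b - a) - (expR b ^+ 2 - expR a ^+ 2)).
rewrite subr_ge0 => /(_ (ltW hl) H).
have := @mulr_ge0 _ lambda (expR b - expR a); rewrite subr_ge0 => /(_ (ltW hl) eab).
have := @mulr_ge0 _ (K - 2 * lambda) (b - a); rewrite !subr_ge0 => /(_ (ltW hK) hab).
nra.
Qed.

End Aux.

Theorem lemma3p3 (R : realType) (n M : nat) (lambda K : R)
  (p : 'I_M -> zpt n) (nn : 'I_M -> nat) (Om0 Om : seq (zpt n))
  (u : nat -> zpt n -> R) (uOm : zpt n -> R) (V : zpt n -> R) :
  (2 <= n)%N -> 0 < lambda -> (0 < M)%N ->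
  injective p -> (forall j, (0 < nn j)%N) ->
  (forall j, p j \in Om0) ->
  {subset Om0 <= Om} -> zconnected Om ->
  2 * lambda < K ->
  (* u_0 = 0 *)
  (forall x, zclos Om x -> u 0%N x = 0) ->
  (* u_k, k >= 1, solves the linear Dirichlet problem *)
  (forall k x, x \in Om ->
     zlap (u k.+1) x - K * u k.+1 x =
     lambda * expR (u k x) * (expR (u k x) - 1) + gsrc R p nn x - K * u k x) ->
  (forall k x, zbdry Om x -> u k.+1 x = 0) ->
  (* u_Omega is the pointwise limit *)
  (forall x, zclos Om x -> (fun k => u k x) @ \oo --> uOm x) ->
  (* V is a supersolution *)
  (forall x, x \in Om ->
     zlap V x >= lambda * expR (V x) * (expR (V x) - 1) + gsrc R p nn x) ->
  (forall x, zbdry Om x -> V x <= 0) ->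
  forall x, zclos Om x ->
    [/\ u 0%N x = 0,
        (forall k, u k.+1 x <= u k x),
        (forall k, uOm x <= u k x) &
        V x <= uOm x].
Proof.
move=> hn hl hM hinj hnn hp0 hsub hconn hK hu0 hrec hbd hlim hV hVb x hx.
have K0 : 0 < K by have := mulr_gt0 (ltr0Sn R 1) hl; lra.
have g0 : forall y, 0 <= gsrc R p nn y.
  move=> y; rewrite /gsrc; apply: mulr_ge0; first by apply: mulr_ge0 => //; exact: ltW (pi_gt0 R).
  by apply: sumr_ge0 => j _; apply: mulr_ge0.
have inclos : forall y, y \in Om -> zclos Om y by move=> y hy; rewrite /zclos hy.
have bdclos : forall y, zbdry Om y -> zclos Om y by move=> y hy; rewrite /zclos hy orbT.
have step : forall a b : zpt n -> R,
   (forall y, zbdry Om y -> a y - b y <= 0) ->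
   (forall y, y \in Om -> 0 <= zlap a y - K * a y - (zlap b y - K * b y)) ->
   forall y, zclos Om y -> a y <= b y.
  move=> a b hb hi y hy; rewrite -subr_le0.
  apply: (@maxp n R Om (fun y => a y - b y)) hy => // z hz wz.
  rewrite zlapB; have := hi z hz; nra.
have mono : forall k, (forall y, zclos Om y -> u k.+1 y <= u k y) /\
                      (forall y, zclos Om y -> u k y <= 0).
  elim=> [|k [IH1 IH2]].
    split; last by move=> y /hu0 ->.
    apply: step => [y hy|y hy].
      by rewrite hbd // hu0 ?bdclos // subrr.
    have l0 : zlap (u 0%N) y = 0.
      rewrite /zlap big_seq big1 // => z hz.
      have hz' := @nbr_clos n Om y z hy hz; by rewrite (hu0 z hz') (hu0 y (inclos y hy)) subrr.
    rewrite hrec // l0 (hu0 y (inclos y hy)) expR0 subrr; have := g0 y; lra.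
  have h2 : forall y, zclos Om y -> u k.+1 y <= 0.
    by move=> y hy; apply: le_trans (IH1 y hy) (IH2 y hy).
  split => //; apply: step => [y hy|y hy].
    by rewrite !hbd // subrr.
  rewrite !hrec //.
  have := @fmono R lambda K _ _ hl hK (IH1 y (inclos y hy)) (IH2 y (inclos y hy)); lra.
have Vle0 : forall y, zclos Om y -> V y <= 0.
  apply: maxp => // z hz Vz; apply: lt_le_trans (hV z hz).
  have h1 : 0 < lambda * expR (V z) * (expR (V z) - 1).
    apply: mulr_gt0; first exact: mulr_gt0 (expR_gt0 _).
    by rewrite subr_gt0 expR_gt1.
  have := g0 z; lra.
have Vle : forall k y, zclos Om y -> V y <= u k y.
  elim=> [|k IH] y hy; first by rewrite hu0 // Vle0.
  move: y hy; apply: step => [y hy|y hy].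
    by rewrite hbd // subr0; apply: hVb.
  rewrite hrec //.
  have := @fmono R lambda K _ _ hl hK (IH y (inclos y hy)) ((mono k).2 y (inclos y hy)).
  have := hV y hy; lra.
have hom : {homo (fun k => u k x) : a b / (a <= b)%N >-> b <= a}.
  apply: (homo_leq (r := fun a b : R => b <= a)).
  - by move=> a.
  - by move=> a b c h1 h2; apply: le_trans h2 h1.
  - by move=> k; apply: (mono k).1.
have cv := hlim x hx.
have limE : limn (fun k => u k x) = uOm x by apply: cvg_lim.
split; first exact: hu0.
- by move=> k; apply: (mono k).1.
- move=> k; rewrite -limE; apply: nonincreasing_cvgn_ge => //.
  by apply/cvg_ex; exists (uOm x).
- rewrite -limE; apply: limr_ge; first by apply/cvg_ex; exists (uOm x).
  by near=> k; apply: Vle.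
Unshelve. all: by end_near.
Qed.
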